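(* Let $G$ be any of the sequent calculi $\mathbf{GCE}$, $\mathbf{GCM}$, $\mathbf{GCMC}$, $\mathbf{GCEN}$, $\mathbf{GCMN}$, $\mathbf{GCK}$. Then the cut rule is admissible in $G$: if $G\vdash\Gamma_1\Rightarrow\phi,\Delta_1$ and $G\vdash\phi,\Gamma_2\Rightarrow\Delta_2$, then $G\vdash\Gamma_1,\Gamma_2\Rightarrow\Delta_1,\Delta_2$.
   Context: Formulas are those of $\mathcal{L}_\triangleright$: built from atoms and $\bot$ with $\wedge,\vee,\to$ and the binary $\triangleright$. A sequent is $\Gamma\Rightarrow\Delta$ with $\Gamma,\Delta$ finite multisets of formulas. $\mathbf{G3cp}$ has axioms $\Gamma,p\Rightarrow p,\Delta$ ($p$ atomic) and $\Gamma,\bot\Rightarrow\Delta$, and rules: $(L\wedge)$ from $\Gamma,\phi,\psi\Rightarrow\Delta$ infer $\Gamma,\phi\wedge\psi\Rightarrow\Delta$; $(R\wedge)$ from $\Gamma\Rightarrow\phi,\Delta$ and $\Gamma\Rightarrow\psi,\Delta$ infer $\Gamma\Rightarrow\phi\wedge\psi,\Delta$; $(L\vee)$ from $\Gamma,\phi\Rightarrow\Delta$ and $\Gamma,\psi\Rightarrow\Delta$ infer $\Gamma,\phi\vee\psi\Rightarrow\Delta$; $(R\vee)$ from $\Gamma\Rightarrow\phi,\psi,\Delta$ infer $\Gamma\Rightarrow\phi\vee\psi,\Delta$; $(L\to)$ from $\Gamma\Rightarrow\phi,\Delta$ and $\Gamma,\psi\Rightarrow\Delta$ infer $\Gamma,\phi\to\psi\Rightarrow\Delta$;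 $(R\to)$ from $\Gamma,\phi\Rightarrow\psi,\Delta$ infer $\Gamma\Rightarrow\phi\to\psi,\Delta$. $\mathbf{G3W}$ is $\mathbf{G3cp}$ plus weakening: from $\Gamma\Rightarrow\Delta$ infer $\Gamma,\phi\Rightarrow\Delta$, resp. $\Gamma\Rightarrow\phi,\Delta$. Write ''$\alpha\Leftrightarrow\beta$'' as a premise for the two premises $\alpha\Rightarrow\beta$ and $\beta\Rightarrow\alpha$. Conditional rules (no extra context in the conclusion): $(CE)$ from $\phi_0\Leftrightarrow\phi_1$ and $\psi_0\Leftrightarrow\psi_1$ infer $\phi_1\triangleright\psi_1\Rightarrow\phi_0\triangleright\psi_0$; $(CM)$ from $\phi_0\Leftrightarrow\phi_1$ and $\psi_1\Rightarrow\psi_0$ infer $\phi_1\triangleright\psi_1\Rightarrow\phi_0\triangleright\psi_0$; $(CMC)$ for $n\ge1$, from $\phi_0\Leftrightarrow\phi_i$ ($1\le i\le n$) and $\psi_1,\dots,\psi_n\Rightarrow\psi_0$ infer $\phi_1\triangleright\psi_1,\dots,\phi_n\triangleright\psi_n\Rightarrow\phi_0\triangleright\psi_0$; $(CN)$ from $\Rightarrow\psi_0$ infer $\Rightarrow\phi_0\triangleright\psi_0$. $\mathbf{GCE},\mathbf{GCM},\mathbf{GCMC}$ are $\mathbf{G3W}$ plus $(CE)$, $(CM)$, $(CMC)$ respectively; $\mathbf{GCEN},\mathbf{GCMN},\mathbf{GCK}$ are $\mathbf{GCE},\mathbf{GCM},\mathbf{GCMC}$ plus $(CN)$. The cut rule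 is not part of these calculi. *)

(* Defs.v *)
From Stdlib Require Import List Permutation.
Import ListNotations.

Inductive form : Type :=
| Atom : nat -> form
| Bot : form
| And : form -> form -> form
| Or : form -> form -> form
| Imp : form -> form -> form
| Cond : form -> form -> form.

Inductive calculus : Type := GCE | GCM | GCMC | GCEN | GCMN | GCK.

Definition has_CE (c : calculus) : bool :=
  match c with GCE | GCEN => true | _ => false end.
Definition has_CM (c : calculus) : bool :=
  match c with GCM | GCMN => true | _ => false end.
Definition has_CMC (c : calculus) : bool :=
  match c with GCMC | GCK => true | _ => false end.
Definition has_CN (c : calculus) : bool :=
  match c with GCEN | GCMN | GCK => true | _ => false end.

(* Sequents Gamma => Delta with Gamma, Delta finite multisets, represented as
   lists taken up to permutation (rule [perm]). Cut is NOT a rule. *)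
Inductive derivable (c : calculus) : list form -> list form -> Prop :=
| perm : forall G G' D D', Permutation G G' -> Permutation D D' ->
    derivable c G D -> derivable c G' D'
| ax_atom : forall G D p, derivable c (Atom p :: G) (Atom p :: D)
| ax_bot : forall G D, derivable c (Bot :: G) D
| L_and : forall G D a b, derivable c (a :: b :: G) D ->
    derivable c (And a b :: G) D
| R_and : forall G D a b, derivable c G (a :: D) -> derivable c G (b :: D) ->
    derivable c G (And a b :: D)
| L_or : forall G D a b, derivable c (a :: G) D -> derivable c (b :: G) D ->
    derivable c (Or a b :: G) D
| R_or : forall G D a b, derivable c G (a :: b :: D) ->
    derivable c G (Or a b :: D)
| L_imp : forall G D a b, derivable c G (a :: D) -> derivable c (b :: G) D ->
    derivable c (Imp a b :: G) D
| R_imp : forall G D a b, derivable c (a :: G) (b :: D) ->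
    derivable c G (Imp a b :: D)
| WL : forall G D a, derivable c G D -> derivable c (a :: G) D
| WR : forall G D a, derivable c G D -> derivable c G (a :: D)
| rule_CE : forall a0 a1 b0 b1, has_CE c = true ->
    derivable c [a0] [a1] -> derivable c [a1] [a0] ->
    derivable c [b0] [b1] -> derivable c [b1] [b0] ->
    derivable c [Cond a1 b1] [Cond a0 b0]
| rule_CM : forall a0 a1 b0 b1, has_CM c = true ->
    derivable c [a0] [a1] -> derivable c [a1] [a0] ->
    derivable c [b1] [b0] ->
    derivable c [Cond a1 b1] [Cond a0 b0]
| rule_CMC : forall (ps : list (form * form)) a0 b0, has_CMC c = true ->
    ps <> [] ->
    (forall p, In p ps -> derivable c [a0] [fst p] /\ derivable c [fst p] [a0]) ->
    derivable c (map snd ps) [b0] ->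
    derivable c (map (fun p => Cond (fst p) (snd p)) ps) [Cond a0 b0]
| rule_CN : forall a0 b0, has_CN c = true ->
    derivable c [] [b0] -> derivable c [] [Cond a0 b0].

(* Main.v *)
Require Import Defs.
From Stdlib Require Import List Permutation Lia Arith.
Import ListNotations.

Definition form_eq_dec : forall x y : form, {x = y} + {x <> y}.
Proof. decide equality; apply Nat.eq_dec. Qed.

Definition cnd (p : form * form) : form := Cond (fst p) (snd p).

Ltac pm :=
  repeat match goal with H : Permutation _ _ |- _ =>
    let H' := fresh "HC" in
    pose proof (proj1 (Permutation_count_occ form_eq_dec _ _) H) as H'; clear H end;
  apply (proj2 (Permutation_count_occ form_eq_dec _ _));
  let x := fresh "x" in intro x;
  repeat match goal with H : forall _ : form, _ |- _ => specialize (H x) end;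
  repeat (first [ rewrite count_occ_app in * | progress simpl in * ]);
  repeat (match goal with
          | |- context [form_eq_dec ?a ?b] => destruct (form_eq_dec a b); try subst
          | H : context [form_eq_dec ?a ?b] |- _ => destruct (form_eq_dec a b); try subst
          end); try congruence; lia.

Lemma perm_cons_cases (x y : form) (l l' : list form) : Permutation (x::l) (y::l') ->
  (x = y /\ Permutation l l') \/ exists k, Permutation l (y::k) /\ Permutation l' (x::k).
Proof.
  intro H. destruct (form_eq_dec x y) as [e|n].
  - subst. left. split; auto. eapply Permutation_cons_inv; eauto.
  - right. assert (Hi : In y l).
    { assert (In y (x::l)) by (apply (Permutation_in _ (Permutation_sym H)); simpl; auto).
      destruct H0; [congruence|auto]. }
    destruct (in_split _ _ Hi) as [l1 [l2 ->]].
    exists (l1 ++ l2). split.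
    + apply Permutation_sym, Permutation_middle.
    + pm.
Qed.

Lemma perm_in (x : form) (l l' : list form) : Permutation l l' -> In x l -> In x l'.
Proof. intros; eapply Permutation_in; eauto. Qed.

Lemma in_perm (x : form) l : In x l -> exists k, Permutation l (x::k).
Proof. intro H; destruct (in_split _ _ H) as [l1 [l2 ->]]; exists (l1++l2).
  apply Permutation_sym, Permutation_middle. Qed.

Lemma in_cons_perm (z X : form) l G : Permutation l (X::G) -> In z l -> z = X \/ In z G.
Proof. intros H Hi. apply (perm_in _ _ _ H) in Hi. destruct Hi; auto. Qed.

Section DV.
Variable c : calculus.

Inductive dv : list form -> list form -> Prop :=
| d_ax : forall G D p, In (Atom p) G -> In (Atom p) D -> dv G D
| d_bot : forall G D, In Bot G -> dv G D
| d_Land : forall G D G0 a b, Permutation G (And a b :: G0) -> dv (a::b::G0) D -> dv G D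
| d_Rand : forall G D D0 a b, Permutation D (And a b :: D0) -> dv G (a::D0) -> dv G (b::D0) -> dv G D
| d_Lor : forall G D G0 a b, Permutation G (Or a b :: G0) -> dv (a::G0) D -> dv (b::G0) D -> dv G D
| d_Ror : forall G D D0 a b, Permutation D (Or a b :: D0) -> dv G (a::b::D0) -> dv G D
| d_Limp : forall G D G0 a b, Permutation G (Imp a b :: G0) -> dv G0 (a::D) -> dv (b::G0) D -> dv G D
| d_Rimp : forall G D D0 a b, Permutation D (Imp a b :: D0) -> dv (a::G) (b::D0) -> dv G D
| d_CE : forall G D a0 a1 b0 b1, has_CE c = true -> In (Cond a1 b1) G -> In (Cond a0 b0) D ->
    dv [a0] [a1] -> dv [a1] [a0] -> dv [b0] [b1] -> dv [b1] [b0] -> dv G D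
| d_CM : forall G D a0 a1 b0 b1, has_CM c = true -> In (Cond a1 b1) G -> In (Cond a0 b0) D ->
    dv [a0] [a1] -> dv [a1] [a0] -> dv [b1] [b0] -> dv G D
| d_CMC : forall G D G0 ps a0 b0, has_CMC c = true -> ps <> [] ->
    Permutation G (map cnd ps ++ G0) -> In (Cond a0 b0) D ->
    (forall p, In p ps -> dv [a0] [fst p]) -> (forall p, In p ps -> dv [fst p] [a0]) ->
    dv (map snd ps) [b0] -> dv G D
| d_CN : forall G D a0 b0, has_CN c = true -> In (Cond a0 b0) D -> dv [] [b0] -> dv G D.

Lemma dv_perm : forall G D, dv G D -> forall G' D', Permutation G G' -> Permutation D D' -> dv G' D'.
Proof.
  induction 1; intros G' D' HG HD.
  - eapply d_ax; eapply perm_in; eauto.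
  - eapply d_bot; eapply perm_in; eauto.
  - apply d_Land with (G0 := G0) (a := a) (b := b); [pm | apply IHdv; auto].
  - apply d_Rand with (D0 := D0) (a := a) (b := b); [pm | apply IHdv1 | apply IHdv2]; auto.
  - apply d_Lor with (G0 := G0) (a := a) (b := b); [pm | apply IHdv1 | apply IHdv2]; auto.
  - apply d_Ror with (D0 := D0) (a := a) (b := b); [pm | apply IHdv]; auto.
  - apply d_Limp with (G0 := G0) (a := a) (b := b); [pm | apply IHdv1 | apply IHdv2]; auto.
  - apply d_Rimp with (D0 := D0) (a := a) (b := b); [pm | apply IHdv]; auto.
  - apply d_CE with a0 a1 b0 b1; auto; eapply perm_in; eauto.
  - apply d_CM with a0 a1 b0 b1; auto; eapply perm_in; eauto.
  - apply d_CMC with G0 ps a0 b0; auto; [pm | eapply perm_in; eauto].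
  - apply d_CN with a0 b0; auto; eapply perm_in; eauto.
Qed.

Lemma dv_weak : forall G D, dv G D -> forall G' D', dv (G ++ G') (D ++ D').
Proof.
  induction 1; intros G' D'.
  - eapply d_ax; apply in_or_app; eauto.
  - eapply d_bot; apply in_or_app; eauto.
  - apply d_Land with (G0 := G0 ++ G') (a := a) (b := b); [pm | apply IHdv].
  - apply d_Rand with (D0 := D0 ++ D') (a := a) (b := b); [pm | apply IHdv1 | apply IHdv2].
  - apply d_Lor with (G0 := G0 ++ G') (a := a) (b := b); [pm | apply IHdv1 | apply IHdv2].
  - apply d_Ror with (D0 := D0 ++ D') (a := a) (b := b); [pm | apply IHdv].
  - apply d_Limp with (G0 := G0 ++ G') (a := a) (b := b); [pm | apply IHdv1 | apply (IHdv2 G' D')].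
  - apply d_Rimp with (D0 := D0 ++ D') (a := a) (b := b); [pm | apply (IHdv G' D')].
  - apply d_CE with a0 a1 b0 b1; auto; apply in_or_app; eauto.
  - apply d_CM with a0 a1 b0 b1; auto; apply in_or_app; eauto.
  - apply d_CMC with (G0 ++ G') ps a0 b0; auto; [pm | apply in_or_app; eauto].
  - apply d_CN with a0 b0; auto; apply in_or_app; eauto.
Qed.

Lemma dv_wk G D G' D' : dv G D -> (exists L, Permutation G' (G ++ L)) -> (exists M, Permutation D' (D ++ M)) -> dv G' D'.
Proof. intros H [L HL] [M HM]. eapply dv_perm; [apply (dv_weak _ _ H L M) | |]; apply Permutation_sym; auto. Qed.

End DV.

Lemma dvWL c G D a : dv c G D -> dv c (a::G) D.
Proof. intro H. eapply dv_perm; [apply (dv_weak c _ _ H [a] []) | | ]. pm. rewrite app_nil_r; auto. Qed.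
Lemma dvWR c G D a : dv c G D -> dv c G (a::D).
Proof. intro H. eapply dv_perm; [apply (dv_weak c _ _ H [] [a]) | | ]. rewrite app_nil_r; auto. pm. Qed.

Lemma perm_map_nil ps : Permutation (map (fun p => Cond (fst p) (snd p)) ps) (map cnd ps ++ []).
Proof. rewrite app_nil_r. apply Permutation_refl. Qed.

Fixpoint der2dv c G D (H : derivable c G D) {struct H} : dv c G D :=
  match H in derivable _ G D return dv c G D with
  | perm _ G G' D D' p1 p2 h => dv_perm c G D (der2dv c _ _ h) G' D' p1 p2
  | ax_atom _ G D p => d_ax c _ _ p (in_eq _ _) (in_eq _ _)
  | ax_bot _ G D => d_bot c _ _ (in_eq _ _)
  | L_and _ G D a b h => d_Land c _ _ G a b (Permutation_refl _) (der2dv c _ _ h)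
  | R_and _ G D a b h1 h2 => d_Rand c _ _ D a b (Permutation_refl _) (der2dv c _ _ h1) (der2dv c _ _ h2)
  | L_or _ G D a b h1 h2 => d_Lor c _ _ G a b (Permutation_refl _) (der2dv c _ _ h1) (der2dv c _ _ h2)
  | R_or _ G D a b h => d_Ror c _ _ D a b (Permutation_refl _) (der2dv c _ _ h)
  | L_imp _ G D a b h1 h2 => d_Limp c _ _ G a b (Permutation_refl _) (der2dv c _ _ h1) (der2dv c _ _ h2)
  | R_imp _ G D a b h => d_Rimp c _ _ D a b (Permutation_refl _) (der2dv c _ _ h)
  | WL _ G D a h => dvWL c G D a (der2dv c _ _ h)
  | WR _ G D a h => dvWR c G D a (der2dv c _ _ h)
  | rule_CE _ a0 a1 b0 b1 hc h1 h2 h3 h4 =>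
      d_CE c _ _ a0 a1 b0 b1 hc (in_eq _ _) (in_eq _ _) (der2dv c _ _ h1) (der2dv c _ _ h2) (der2dv c _ _ h3) (der2dv c _ _ h4)
  | rule_CM _ a0 a1 b0 b1 hc h1 h2 h3 =>
      d_CM c _ _ a0 a1 b0 b1 hc (in_eq _ _) (in_eq _ _) (der2dv c _ _ h1) (der2dv c _ _ h2) (der2dv c _ _ h3)
  | rule_CMC _ ps a0 b0 hc hne hp hs =>
      d_CMC c _ _ [] ps a0 b0 hc hne (perm_map_nil ps) (in_eq _ _)
        (fun p i => match hp p i with conj x _ => der2dv c _ _ x end)
        (fun p i => match hp p i with conj _ y => der2dv c _ _ y end)
        (der2dv c _ _ hs)
  | rule_CN _ a0 b0 hc h => d_CN c _ _ a0 b0 hc (in_eq _ _) (der2dv c _ _ h)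
  end.

Lemma der_perm c G D G' D' : derivable c G D -> Permutation G G' -> Permutation D D' -> derivable c G' D'.
Proof. intros; eapply perm; eauto. Qed.

Lemma der_weak c G D L M : derivable c G D -> derivable c (L ++ G) (M ++ D).
Proof.
  intro H. induction M; simpl.
  - induction L; simpl; auto. apply WL; auto.
  - apply WR; auto.
Qed.

Lemma der_wk c G D G' D' : derivable c G D -> (exists L, Permutation G' (L ++ G)) -> (exists M, Permutation D' (M ++ D)) -> derivable c G' D'.
Proof. intros H [L HL] [M HM]. eapply der_perm; [apply (der_weak c _ _ L M H)| |]; apply Permutation_sym; auto. Qed.

Lemma dv2der c : forall G D, dv c G D -> derivable c G D.
Proof.
  induction 1.
  - destruct (in_perm _ _ H) as [G0 HG]; destruct (in_perm _ _ H0) as [D0 HD].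
    eapply der_perm; [apply ax_atom with (G:=G0) (D:=D0) | |]; apply Permutation_sym; eauto.
  - destruct (in_perm _ _ H) as [G0 HG].
    eapply der_perm; [apply ax_bot with (G:=G0) (D:=D) | |]; [apply Permutation_sym; eauto | auto].
  - eapply der_perm; [apply L_and with (a:=a) (b:=b); eauto | apply Permutation_sym; eauto | auto].
  - eapply der_perm; [apply R_and with (a:=a) (b:=b); eauto | auto | apply Permutation_sym; eauto].
  - eapply der_perm; [apply L_or with (a:=a) (b:=b); eauto | apply Permutation_sym; eauto | auto].
  - eapply der_perm; [apply R_or with (a:=a) (b:=b); eauto | auto | apply Permutation_sym; eauto].
  - eapply der_perm; [apply L_imp with (a:=a) (b:=b); eauto | apply Permutation_sym; eauto | auto].
  - eapply der_perm; [apply R_imp with (a:=a) (b:=b); eauto | auto | apply Permutation_sym; eauto].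
  - destruct (in_perm _ _ H0) as [G0 HG]; destruct (in_perm _ _ H1) as [D0 HD].
    eapply der_wk; [apply rule_CE with (a0:=a0) (a1:=a1) (b0:=b0) (b1:=b1); eauto | exists G0 | exists D0]; pm.
  - destruct (in_perm _ _ H0) as [G0 HG]; destruct (in_perm _ _ H1) as [D0 HD].
    eapply der_wk; [apply rule_CM with (a0:=a0) (a1:=a1) (b0:=b0) (b1:=b1); eauto | exists G0 | exists D0]; pm.
  - destruct (in_perm _ _ H2) as [D0 HD].
    eapply der_wk; [apply rule_CMC with (ps:=ps) (a0:=a0) (b0:=b0); eauto | exists G0 | exists D0].
    + change (map (fun p => Cond (fst p) (snd p)) ps) with (map cnd ps). pm.
    + pm.
  - destruct (in_perm _ _ H0) as [D0 HD].
    eapply der_wk; [apply rule_CN with (a0:=a0) (b0:=b0); eauto | exists G | exists D0]; pm.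
Qed.

Lemma map_cnd_notin X ps G0 G : (forall a b, X <> Cond a b) ->
  Permutation (map cnd ps ++ G0) (X::G) ->
  exists G0', Permutation G0 (X::G0') /\ Permutation G (map cnd ps ++ G0').
Proof.
  intros hC H. assert (Hi : In X (map cnd ps ++ G0)) by (eapply perm_in; [apply Permutation_sym; eauto| left; auto]).
  apply in_app_or in Hi. destruct Hi as [Hi|Hi].
  - apply in_map_iff in Hi. destruct Hi as [[x y] [Hx _]]. unfold cnd in Hx; simpl in Hx. exfalso; eapply hC; eauto.
  - destruct (in_perm _ _ Hi) as [G0' HG]. exists G0'. split; auto. pm.
Qed.

Lemma in_notX (z X : form) E G : Permutation E (X::G) -> In z E -> z <> X -> In z G.
Proof. intros H Hi hn. destruct (in_cons_perm _ _ _ _ H Hi); auto; congruence. Qed.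

Lemma inv_L c X L R (hA : forall p, X <> Atom p) (hB : X <> Bot) (hC : forall a b, X <> Cond a b)
 (HLand : forall a b G D, X = And a b -> dv c (a::b::G) D -> dv c (L++G) (R++D))
 (HLor : forall a b G D, X = Or a b -> dv c (a::G) D -> dv c (b::G) D -> dv c (L++G) (R++D))
 (HLimp : forall a b G D, X = Imp a b -> dv c G (a::D) -> dv c (b::G) D -> dv c (L++G) (R++D)) :
 forall E D, dv c E D -> forall G, Permutation E (X::G) -> dv c (L++G) (R++D).
Proof.
  induction 1; intros GG HE.
  - apply d_ax with p; apply in_or_app; right; auto. eapply in_notX; eauto; intro e; eapply hA; eauto.
  - apply d_bot; apply in_or_app; right. eapply in_notX; eauto.
  - assert (HP : Permutation (And a b :: G0) (X :: GG)) by (apply (Permutation_trans (Permutation_sym H) HE)).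
    destruct (perm_cons_cases _ _ _ _ HP) as [[e HG]|[k [Hk1 Hk2]]].
    + apply HLand with a b; auto. apply (dv_perm c _ _ H0); auto; pm.
    + apply d_Land with (G0 := L ++ k) (a:=a) (b:=b); [pm|].
      eapply dv_perm; [apply (IHdv (a::b::k)); pm | pm | auto].
  - apply d_Rand with (D0 := R ++ D0) (a:=a) (b:=b); [pm| |].
    + eapply dv_perm; [apply (IHdv1 GG HE) | auto | pm].
    + eapply dv_perm; [apply (IHdv2 GG HE) | auto | pm].
  - assert (HP : Permutation (Or a b :: G0) (X :: GG)) by (apply (Permutation_trans (Permutation_sym H) HE)).
    destruct (perm_cons_cases _ _ _ _ HP) as [[e HG]|[k [Hk1 Hk2]]].
    + apply HLor with a b; auto; [apply (dv_perm c _ _ H0) | apply (dv_perm c _ _ H1)]; auto; pm.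
    + apply d_Lor with (G0 := L ++ k) (a:=a) (b:=b); [pm| |].
      * eapply dv_perm; [apply (IHdv1 (a::k)); pm | pm | auto].
      * eapply dv_perm; [apply (IHdv2 (b::k)); pm | pm | auto].
  - apply d_Ror with (D0 := R ++ D0) (a:=a) (b:=b); [pm|].
    eapply dv_perm; [apply (IHdv GG HE) | auto | pm].
  - assert (HP : Permutation (Imp a b :: G0) (X :: GG)) by (apply (Permutation_trans (Permutation_sym H) HE)).
    destruct (perm_cons_cases _ _ _ _ HP) as [[e HG]|[k [Hk1 Hk2]]].
    + apply HLimp with a b; auto; [apply (dv_perm c _ _ H0) | apply (dv_perm c _ _ H1)]; auto; pm.
    + apply d_Limp with (G0 := L ++ k) (a:=a) (b:=b); [pm| |].
      * eapply dv_perm; [apply (IHdv1 k); pm | pm | pm].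
      * eapply dv_perm; [apply (IHdv2 (b::k)); pm | pm | auto].
  - apply d_Rimp with (D0 := R ++ D0) (a:=a) (b:=b); [pm|].
    eapply dv_perm; [apply (IHdv (a::GG)); pm | pm | pm].
  - apply d_CE with a0 a1 b0 b1; auto; apply in_or_app; right; auto.
    eapply in_notX; eauto.
  - apply d_CM with a0 a1 b0 b1; auto; apply in_or_app; right; auto.
    eapply in_notX; eauto.
  - destruct (map_cnd_notin X ps G0 GG hC) as [G0' [Hm1 Hm2]]. apply (Permutation_trans (Permutation_sym H1) HE).
    apply d_CMC with (L ++ G0') ps a0 b0; auto. pm. apply in_or_app; auto.
  - apply d_CN with a0 b0; auto; apply in_or_app; auto.
Qed.

Lemma inv_R c X L R (hA : forall p, X <> Atom p) (hC : forall a b, X <> Cond a b)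
 (HRand : forall a b G D, X = And a b -> dv c G (a::D) -> dv c G (b::D) -> dv c (L++G) (R++D))
 (HRor : forall a b G D, X = Or a b -> dv c G (a::b::D) -> dv c (L++G) (R++D))
 (HRimp : forall a b G D, X = Imp a b -> dv c (a::G) (b::D) -> dv c (L++G) (R++D)) :
 forall G F, dv c G F -> forall D, Permutation F (X::D) -> dv c (L++G) (R++D).
Proof.
  induction 1; intros DD HF.
  - apply d_ax with p; apply in_or_app; right; auto. eapply in_notX; eauto; intro e; eapply hA; eauto.
  - apply d_bot; apply in_or_app; right; auto.
  - apply d_Land with (G0 := L ++ G0) (a:=a) (b:=b); [pm|].
    eapply dv_perm; [apply (IHdv DD HF) | pm | auto].
  - assert (HP : Permutation (And a b :: D0) (X :: DD)) by (apply (Permutation_trans (Permutation_sym H) HF)).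
    destruct (perm_cons_cases _ _ _ _ HP) as [[e HG]|[k [Hk1 Hk2]]].
    + apply HRand with a b; auto; [apply (dv_perm c _ _ H0) | apply (dv_perm c _ _ H1)]; auto; pm.
    + apply d_Rand with (D0 := R ++ k) (a:=a) (b:=b); [pm| |].
      * eapply dv_perm; [apply (IHdv1 (a::k)); pm | auto | pm].
      * eapply dv_perm; [apply (IHdv2 (b::k)); pm | auto | pm].
  - apply d_Lor with (G0 := L ++ G0) (a:=a) (b:=b); [pm| |].
    + eapply dv_perm; [apply (IHdv1 DD HF) | pm | auto].
    + eapply dv_perm; [apply (IHdv2 DD HF) | pm | auto].
  - assert (HP : Permutation (Or a b :: D0) (X :: DD)) by (apply (Permutation_trans (Permutation_sym H) HF)).
    destruct (perm_cons_cases _ _ _ _ HP) as [[e HG]|[k [Hk1 Hk2]]].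
    + apply HRor with a b; auto; apply (dv_perm c _ _ H0); auto; pm.
    + apply d_Ror with (D0 := R ++ k) (a:=a) (b:=b); [pm|].
      eapply dv_perm; [apply (IHdv (a::b::k)); pm | auto | pm].
  - apply d_Limp with (G0 := L ++ G0) (a:=a) (b:=b); [pm| |].
    + eapply dv_perm; [apply (IHdv1 (a::DD)); pm | pm | pm].
    + eapply dv_perm; [apply (IHdv2 DD HF) | pm | auto].
  - assert (HP : Permutation (Imp a b :: D0) (X :: DD)) by (apply (Permutation_trans (Permutation_sym H) HF)).
    destruct (perm_cons_cases _ _ _ _ HP) as [[e HG]|[k [Hk1 Hk2]]].
    + apply HRimp with a b; auto; apply (dv_perm c _ _ H0); auto; pm.
    + apply d_Rimp with (D0 := R ++ k) (a:=a) (b:=b); [pm|].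
      eapply dv_perm; [apply (IHdv (b::k)); pm | pm | pm].
  - apply d_CE with a0 a1 b0 b1; auto; apply in_or_app; right; auto.
    eapply in_notX; eauto.
  - apply d_CM with a0 a1 b0 b1; auto; apply in_or_app; right; auto.
    eapply in_notX; eauto.
  - apply d_CMC with (L ++ G0) ps a0 b0; auto. pm. apply in_or_app; right.
    eapply in_notX; eauto.
  - apply d_CN with a0 b0; auto; apply in_or_app; right. eapply in_notX; eauto.
Qed.

Ltac invh := intros; try discriminate;
  match goal with e : _ = _ |- _ => injection e as <- <- end; simpl; auto.
Ltac invside := solve [intros; discriminate | intro; discriminate].

Lemma invLand c a b G D : dv c (And a b :: G) D -> dv c (a::b::G) D.
Proof. intro H. apply (inv_L c (And a b) [a;b] []) with (E := And a b :: G); auto; try invside; invh. Qed.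
Lemma invLor1 c a b G D : dv c (Or a b :: G) D -> dv c (a::G) D.
Proof. intro H. apply (inv_L c (Or a b) [a] []) with (E := Or a b :: G); auto; try invside; invh. Qed.
Lemma invLor2 c a b G D : dv c (Or a b :: G) D -> dv c (b::G) D.
Proof. intro H. apply (inv_L c (Or a b) [b] []) with (E := Or a b :: G); auto; try invside; invh. Qed.
Lemma invLimp1 c a b G D : dv c (Imp a b :: G) D -> dv c G (a::D).
Proof. intro H. apply (inv_L c (Imp a b) [] [a]) with (E := Imp a b :: G); auto; try invside; invh. Qed.
Lemma invLimp2 c a b G D : dv c (Imp a b :: G) D -> dv c (b::G) D.
Proof. intro H. apply (inv_L c (Imp a b) [b] []) with (E := Imp a b :: G); auto; try invside; invh. Qed.
Lemma invRand1 c a b G D : dv c G (And a b :: D) -> dv c G (a::D).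
Proof. intro H. apply (inv_R c (And a b) [] [a]) with (F := And a b :: D); auto; try invside; invh. Qed.
Lemma invRand2 c a b G D : dv c G (And a b :: D) -> dv c G (b::D).
Proof. intro H. apply (inv_R c (And a b) [] [b]) with (F := And a b :: D); auto; try invside; invh. Qed.
Lemma invRor c a b G D : dv c G (Or a b :: D) -> dv c G (a::b::D).
Proof. intro H. apply (inv_R c (Or a b) [] [a;b]) with (F := Or a b :: D); auto; try invside; invh. Qed.
Lemma invRimp c a b G D : dv c G (Imp a b :: D) -> dv c (a::G) (b::D).
Proof. intro H. apply (inv_R c (Imp a b) [a] [b]) with (F := Imp a b :: D); auto; try invside; invh. Qed.

Lemma in_perm_gen {T} (x : T) l : In x l -> exists k, Permutation l (x::k).
Proof. intro H; destruct (in_split _ _ H) as [l1 [l2 ->]]; exists (l1++l2).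
  apply Permutation_sym, Permutation_middle. Qed.

Lemma perm_cons2 (X A : form) E0 G : Permutation (X::E0) (A::A::G) ->
  (X = A /\ Permutation E0 (A::G)) \/ exists l, Permutation G (X::l) /\ Permutation E0 (A::A::l).
Proof.
  intro H. destruct (perm_cons_cases _ _ _ _ H) as [[e HG]|[k [H1 H2]]].
  - left; auto.
  - destruct (perm_cons_cases _ _ _ _ H2) as [[e HG]|[l [H3 H4]]].
    + left. split; auto. subst. pm.
    + right. exists l. split; auto. pm.
Qed.

Lemma in_AA (z A : form) E G : Permutation E (A::A::G) -> In z E -> In z (A::G).
Proof. intros H Hi. apply (perm_in _ _ _ H) in Hi. simpl in *; tauto. Qed.

Lemma cnd_inj p q : cnd p = cnd q -> p = q.
Proof. destruct p, q; unfold cnd; simpl; intro e; injection e; intros; subst; auto. Qed.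

Lemma in_dec_form (x : form) l : {In x l} + {~ In x l}.
Proof. apply in_dec, form_eq_dec. Qed.

Lemma contrL_gen c A
 (HLand : forall a b G D, A = And a b -> dv c (a::b::A::G) D -> dv c (A::G) D)
 (HLor : forall a b G D, A = Or a b -> dv c (a::A::G) D -> dv c (b::A::G) D -> dv c (A::G) D)
 (HLimp : forall a b G D, A = Imp a b -> dv c (A::G) (a::D) -> dv c (b::A::G) D -> dv c (A::G) D)
 (HCMC : forall a b, A = Cond a b -> forall G D, dv c (b::b::G) D -> dv c (b::G) D) :
 forall E D, dv c E D -> forall G, Permutation E (A::A::G) -> dv c (A::G) D.
Proof.
  induction 1; intros GG HE.
  - apply d_ax with p; auto. eapply in_AA; eauto.
  - apply d_bot; auto. eapply in_AA; eauto.
  - assert (HP : Permutation (And a b :: G0) (A::A::GG)) by (apply (Permutation_trans (Permutation_sym H) HE)).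
    destruct (perm_cons2 _ _ _ _ HP) as [[e HG]|[l [Hl1 Hl2]]].
    + apply HLand with a b; auto. apply (dv_perm c _ _ H0); auto; pm.
    + apply d_Land with (G0 := A :: l) (a:=a) (b:=b); [pm|].
      apply (dv_perm c _ _ (IHdv (a::b::l) ltac:(pm))); pm.
  - apply d_Rand with (D0 := D0) (a:=a) (b:=b); auto.
  - assert (HP : Permutation (Or a b :: G0) (A::A::GG)) by (apply (Permutation_trans (Permutation_sym H) HE)).
    destruct (perm_cons2 _ _ _ _ HP) as [[e HG]|[l [Hl1 Hl2]]].
    + apply HLor with a b; auto; [apply (dv_perm c _ _ H0)|apply (dv_perm c _ _ H1)]; auto; pm.
    + apply d_Lor with (G0 := A :: l) (a:=a) (b:=b); [pm| |].
      * apply (dv_perm c _ _ (IHdv1 (a::l) ltac:(pm))); pm.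
      * apply (dv_perm c _ _ (IHdv2 (b::l) ltac:(pm))); pm.
  - apply d_Ror with (D0 := D0) (a:=a) (b:=b); auto.
  - assert (HP : Permutation (Imp a b :: G0) (A::A::GG)) by (apply (Permutation_trans (Permutation_sym H) HE)).
    destruct (perm_cons2 _ _ _ _ HP) as [[e HG]|[l [Hl1 Hl2]]].
    + apply HLimp with a b; auto; [apply (dv_perm c _ _ H0)|apply (dv_perm c _ _ H1)]; auto; pm.
    + apply d_Limp with (G0 := A :: l) (a:=a) (b:=b); [pm| |].
      * apply (IHdv1 l Hl2).
      * apply (dv_perm c _ _ (IHdv2 (b::l) ltac:(pm))); pm.
  - apply d_Rimp with (D0 := D0) (a:=a) (b:=b); auto.
    apply (dv_perm c _ _ (IHdv (a::GG) ltac:(pm))); pm.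
  - apply d_CE with a0 a1 b0 b1; auto. eapply in_AA; eauto.
  - apply d_CM with a0 a1 b0 b1; auto. eapply in_AA; eauto.
  - destruct (in_dec_form A G0) as [Hi|Hi].
    + destruct (in_perm _ _ Hi) as [G0' HG0].
      apply d_CMC with G0' ps a0 b0; auto. pm.
    + assert (HA : In A (map cnd ps)).
      { assert (HH : In A (map cnd ps ++ G0)) by (eapply perm_in; [apply (Permutation_trans (Permutation_sym HE) H1) | left; auto]).
        apply in_app_or in HH; destruct HH; tauto. }
      apply in_map_iff in HA. destruct HA as [q [Hq Hqi]].
      destruct (in_perm_gen _ _ Hqi) as [r Hr].
      assert (Hr' : Permutation (map cnd ps) (cnd q :: map cnd r)) by (apply (Permutation_map cnd Hr)).
      assert (HA2 : In A (map cnd r)).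
      { assert (HH : In A (map cnd r ++ G0)).
        { eapply perm_in; [|apply (in_eq A GG)].
          subst A. pm. }
        apply in_app_or in HH; destruct HH; tauto. }
      apply in_map_iff in HA2. destruct HA2 as [q' [Hq' Hqi']].
      assert (q' = q) by (apply cnd_inj; congruence). subst q'.
      destruct (in_perm_gen _ _ Hqi') as [r' Hr2].
      assert (Hps : Permutation ps (q::q::r')) by (eapply Permutation_trans; [apply Hr| apply perm_skip; auto]).
      apply d_CMC with G0 (q::r') a0 b0; auto.
      * discriminate.
      * assert (Permutation (map cnd r) (map cnd (q::r'))) by (apply Permutation_map; auto).
        simpl in *. subst A. pm.
      * intros p Hp. apply H3. eapply Permutation_in; [apply Permutation_sym, Hps|]. simpl in *; tauto.
      * intros p Hp. apply H5. eapply Permutation_in; [apply Permutation_sym, Hps|]. simpl in *; tauto.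
      * apply (HCMC (fst q) (snd q)). subst A; destruct q; auto.
        apply (dv_perm c _ _ H7); [|auto].
        exact (Permutation_map snd Hps).
  - apply d_CN with a0 b0; auto.
Qed.

Lemma contrR_gen c A
 (HRand : forall a b G D, A = And a b -> dv c G (a::A::D) -> dv c G (b::A::D) -> dv c G (A::D))
 (HRor : forall a b G D, A = Or a b -> dv c G (a::b::A::D) -> dv c G (A::D))
 (HRimp : forall a b G D, A = Imp a b -> dv c (a::G) (b::A::D) -> dv c G (A::D)) :
 forall G F, dv c G F -> forall D, Permutation F (A::A::D) -> dv c G (A::D).
Proof.
  induction 1; intros DD HF.
  - apply d_ax with p; auto. eapply in_AA; eauto.
  - apply d_bot; auto.
  - apply d_Land with (G0 := G0) (a:=a) (b:=b); auto.
  - assert (HP : Permutation (And a b :: D0) (A::A::DD)) by (apply (Permutation_trans (Permutation_sym H) HF)).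
    destruct (perm_cons2 _ _ _ _ HP) as [[e HG]|[l [Hl1 Hl2]]].
    + apply HRand with a b; auto; [apply (dv_perm c _ _ H0)|apply (dv_perm c _ _ H1)]; auto; pm.
    + apply d_Rand with (D0 := A :: l) (a:=a) (b:=b); [pm| |].
      * apply (dv_perm c _ _ (IHdv1 (a::l) ltac:(pm))); pm.
      * apply (dv_perm c _ _ (IHdv2 (b::l) ltac:(pm))); pm.
  - apply d_Lor with (G0 := G0) (a:=a) (b:=b); auto.
  - assert (HP : Permutation (Or a b :: D0) (A::A::DD)) by (apply (Permutation_trans (Permutation_sym H) HF)).
    destruct (perm_cons2 _ _ _ _ HP) as [[e HG]|[l [Hl1 Hl2]]].
    + apply HRor with a b; auto; apply (dv_perm c _ _ H0); auto; pm.
    + apply d_Ror with (D0 := A :: l) (a:=a) (b:=b); [pm|].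
      apply (dv_perm c _ _ (IHdv (a::b::l) ltac:(pm))); pm.
  - apply d_Limp with (G0 := G0) (a:=a) (b:=b); auto.
    apply (dv_perm c _ _ (IHdv1 (a::DD) ltac:(pm))); pm.
  - assert (HP : Permutation (Imp a b :: D0) (A::A::DD)) by (apply (Permutation_trans (Permutation_sym H) HF)).
    destruct (perm_cons2 _ _ _ _ HP) as [[e HG]|[l [Hl1 Hl2]]].
    + apply HRimp with a b; auto; apply (dv_perm c _ _ H0); auto; pm.
    + apply d_Rimp with (D0 := A :: l) (a:=a) (b:=b); [pm|].
      apply (dv_perm c _ _ (IHdv (b::l) ltac:(pm))); pm.
  - apply d_CE with a0 a1 b0 b1; auto. eapply in_AA; eauto.
  - apply d_CM with a0 a1 b0 b1; auto. eapply in_AA; eauto.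
  - apply d_CMC with G0 ps a0 b0; auto. eapply in_AA; eauto.
  - apply d_CN with a0 b0; auto. eapply in_AA; eauto.
Qed.

Lemma contr c A : (forall E D, dv c E D -> forall G, Permutation E (A::A::G) -> dv c (A::G) D) /\
  (forall G F, dv c G F -> forall D, Permutation F (A::A::D) -> dv c G (A::D)).
Proof.
  induction A as [p| |a [CLa CRa] b [CLb CRb]|a [CLa CRa] b [CLb CRb]|a [CLa CRa] b [CLb CRb]|a [CLa CRa] b [CLb CRb]];
  (split; [apply contrL_gen | apply contrR_gen]); try solve [intros x y; intros; discriminate];
  try (intros x y G D e; injection e as e1 e2; subst x y).
  -
    intros H.
    assert (H1 := invLand c a b _ _ (dv_perm c _ _ H (And a b :: a :: b :: G) D ltac:(pm) (Permutation_refl _))).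
    assert (H2 := CLa _ _ H1 (b::b::G) ltac:(pm)).
    assert (H3 := CLb _ _ H2 (a::G) ltac:(pm)).
    apply d_Land with (G0 := G) (a:=a) (b:=b); auto. apply (dv_perm c _ _ H3); pm.
  -
    intros H H0.
    assert (H1 := invRand1 c a b _ _ (dv_perm c _ _ H G (And a b :: a :: D) (Permutation_refl _) ltac:(pm))).
    assert (H2 := invRand2 c a b _ _ (dv_perm c _ _ H0 G (And a b :: b :: D) (Permutation_refl _) ltac:(pm))).
    apply d_Rand with (D0 := D) (a:=a) (b:=b); auto.
    + apply (CRa _ _ H1 D); auto.
    + apply (CRb _ _ H2 D); auto.
  -
    intros H H0.
    assert (H1 := invLor1 c a b _ _ (dv_perm c _ _ H (Or a b :: a :: G) D ltac:(pm) (Permutation_refl _))).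
    assert (H2 := invLor2 c a b _ _ (dv_perm c _ _ H0 (Or a b :: b :: G) D ltac:(pm) (Permutation_refl _))).
    apply d_Lor with (G0 := G) (a:=a) (b:=b); auto.
    + apply (CLa _ _ H1 G); auto.
    + apply (CLb _ _ H2 G); auto.
  -
    intros H.
    assert (H1 := invRor c a b _ _ (dv_perm c _ _ H G (Or a b :: a :: b :: D) (Permutation_refl _) ltac:(pm))).
    assert (H2 := CRa _ _ H1 (b::b::D) ltac:(pm)).
    assert (H3 := CRb _ _ H2 (a::D) ltac:(pm)).
    apply d_Ror with (D0 := D) (a:=a) (b:=b); auto. apply (dv_perm c _ _ H3); pm.
  -
    intros H H0.
    assert (H1 := invLimp1 c a b _ _ H).
    assert (H2 := invLimp2 c a b _ _ (dv_perm c _ _ H0 (Imp a b :: b :: G) D ltac:(pm) (Permutation_refl _))).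
    apply d_Limp with (G0 := G) (a:=a) (b:=b); auto.
    + apply (CRa _ _ H1 D); auto.
    + apply (CLb _ _ H2 G); auto.
  -
    intros H.
    assert (H1 := invRimp c a b _ _ (dv_perm c _ _ H (a::G) (Imp a b :: b :: D) (Permutation_refl _) ltac:(pm))).
    assert (H2 := CLa _ _ H1 G ltac:(pm)).
    assert (H3 := CRb _ _ H2 D ltac:(pm)).
    apply d_Rimp with (D0 := D) (a:=a) (b:=b); auto.
  -
    intros x y e G D H; injection e as e1 e2; subst x y. apply (CLb _ _ H G); auto.
Qed.

Lemma contrL c A G D : dv c (A::A::G) D -> dv c (A::G) D.
Proof. intro H. apply (proj1 (contr c A) _ _ H G); apply Permutation_refl. Qed.
Lemma contrR c A G D : dv c G (A::A::D) -> dv c G (A::D).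
Proof. intro H. apply (proj2 (contr c A) _ _ H D); apply Permutation_refl. Qed.

Lemma contr_lists c L M G D : dv c (L ++ L ++ G) (M ++ M ++ D) -> dv c (L ++ G) (M ++ D).
Proof.
  revert G D M. induction L as [|x L IH]; intros G D M H.
  - simpl in *. revert G D H. induction M as [|y M IHM]; intros G D H; simpl in *; auto.
    assert (H1 : dv c G (M ++ M ++ y :: y :: D)) by (apply (dv_perm c _ _ H); [apply Permutation_refl | pm]).
    apply IHM in H1. apply contrR. apply (dv_perm c _ _ H1); [apply Permutation_refl | pm].
  - simpl in *.
    assert (H1 : dv c (L ++ L ++ x :: x :: G) (M ++ M ++ D)) by (apply (dv_perm c _ _ H); [pm | apply Permutation_refl]).
    apply IH in H1. apply contrL. apply (dv_perm c _ _ H1); [pm | apply Permutation_refl].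
Qed.

Definition cutP c phi := forall G1 D1 G2 D2, dv c G1 (phi::D1) -> dv c (phi::G2) D2 -> dv c (G1++G2) (D1++D2).

Definition kern c u v E : Prop :=
  (has_CE c = true /\ exists a1 b1, In (Cond a1 b1) E /\ dv c [u] [a1] /\ dv c [a1] [u] /\ dv c [v] [b1] /\ dv c [b1] [v])
  \/ (has_CM c = true /\ exists a1 b1, In (Cond a1 b1) E /\ dv c [u] [a1] /\ dv c [a1] [u] /\ dv c [b1] [v])
  \/ (has_CMC c = true /\ exists ps E0, ps <> [] /\ Permutation E (map cnd ps ++ E0) /\
        (forall p, In p ps -> dv c [u] [fst p]) /\ (forall p, In p ps -> dv c [fst p] [u]) /\ dv c (map snd ps) [v])
  \/ (has_CN c = true /\ dv c [] [v]).

Lemma cut1 c a x y : cutP c a -> dv c [x] [a] -> dv c [a] [y] -> dv c [x] [y].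
Proof. intros ca H1 H2. exact (ca [x] [] [] [y] H1 H2). Qed.

Ltac calc c := destruct c; simpl in *; discriminate.

Lemma condcut c u v (cu : cutP c u) (cv : cutP c v) E (K : kern c u v E) :
 forall E2 D2, dv c E2 D2 -> forall G2, Permutation E2 (Cond u v :: G2) -> dv c (E ++ G2) D2.
Proof.
  induction 1; intros GG HE.
  - apply d_ax with p; auto. apply in_or_app; right. eapply in_notX; eauto. discriminate.
  - apply d_bot. apply in_or_app; right. eapply in_notX; eauto. discriminate.
  - assert (HP : Permutation (And a b :: G0) (Cond u v :: GG)) by (apply (Permutation_trans (Permutation_sym H) HE)).
    destruct (perm_cons_cases _ _ _ _ HP) as [[e _]|[k [Hk1 Hk2]]]; [discriminate|].
    apply d_Land with (G0 := E ++ k) (a:=a) (b:=b); [pm|].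
    apply (dv_perm c _ _ (IHdv (a::b::k) ltac:(pm))); [pm|apply Permutation_refl].
  - apply d_Rand with (D0 := D0) (a:=a) (b:=b); auto.
  - assert (HP : Permutation (Or a b :: G0) (Cond u v :: GG)) by (apply (Permutation_trans (Permutation_sym H) HE)).
    destruct (perm_cons_cases _ _ _ _ HP) as [[e _]|[k [Hk1 Hk2]]]; [discriminate|].
    apply d_Lor with (G0 := E ++ k) (a:=a) (b:=b); [pm| |].
    + apply (dv_perm c _ _ (IHdv1 (a::k) ltac:(pm))); [pm|apply Permutation_refl].
    + apply (dv_perm c _ _ (IHdv2 (b::k) ltac:(pm))); [pm|apply Permutation_refl].
  - apply d_Ror with (D0 := D0) (a:=a) (b:=b); auto.
  - assert (HP : Permutation (Imp a b :: G0) (Cond u v :: GG)) by (apply (Permutation_trans (Permutation_sym H) HE)).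
    destruct (perm_cons_cases _ _ _ _ HP) as [[e _]|[k [Hk1 Hk2]]]; [discriminate|].
    apply d_Limp with (G0 := E ++ k) (a:=a) (b:=b); [pm| |].
    + apply (IHdv1 k Hk1).
    + apply (dv_perm c _ _ (IHdv2 (b::k) ltac:(pm))); [pm|apply Permutation_refl].
  - apply d_Rimp with (D0 := D0) (a:=a) (b:=b); auto.
    apply (dv_perm c _ _ (IHdv (a::GG) ltac:(pm))); [pm|apply Permutation_refl].
  - destruct (in_cons_perm _ _ _ _ HE H0) as [e|Hi].
    + injection e as -> ->.
      destruct K as [[hc [p1 [q1 [Hi [K1 [K2 [K3 K4]]]]]]]|[[hc _]|[[hc _]|[hc K1]]]]; try calc c.
      * apply d_CE with a0 p1 b0 q1; auto. apply in_or_app; auto.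
        apply (cut1 c u); auto. apply (cut1 c u); auto.
        apply (cut1 c v); auto. apply (cut1 c v); auto.
      * apply d_CN with a0 b0; auto. exact (cv [] [] [] [b0] K1 H5).
    + apply d_CE with a0 a1 b0 b1; auto. apply in_or_app; auto.
  - destruct (in_cons_perm _ _ _ _ HE H0) as [e|Hi].
    + injection e as -> ->.
      destruct K as [[hc _]|[[hc [p1 [q1 [Hi [K1 [K2 K3]]]]]]|[[hc _]|[hc K1]]]]; try calc c.
      * apply d_CM with a0 p1 b0 q1; auto. apply in_or_app; auto.
        apply (cut1 c u); auto. apply (cut1 c u); auto.
        apply (cut1 c v); auto.
      * apply d_CN with a0 b0; auto. exact (cv [] [] [] [b0] K1 H4).
    + apply d_CM with a0 a1 b0 b1; auto. apply in_or_app; auto.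
  - assert (HI : In (Cond u v) (map cnd ps ++ G0)) by (eapply perm_in; [apply (Permutation_trans (Permutation_sym HE) H1)| left; auto]).
    apply in_app_or in HI. destruct HI as [HI|HI].
    + apply in_map_iff in HI. destruct HI as [q [Hq Hqi]].
      destruct (in_perm_gen _ _ Hqi) as [r Hr].
      assert (Hr' : Permutation (map cnd ps) (cnd q :: map cnd r)) by (apply (Permutation_map cnd Hr)).
      assert (Hs : Permutation (map snd ps) (snd q :: map snd r)) by (apply (Permutation_map snd Hr)).
      destruct q as [qu qv]. unfold cnd in Hq; simpl in *. injection Hq as -> ->.
      change (cnd (u, v)) with (Cond u v) in Hr'.
      assert (HGG : Permutation GG (map cnd r ++ G0)).
      { apply (Permutation_cons_inv (a := Cond u v)). pm. }
      assert (Hrin : forall p, In p r -> In p ps) by (intros p Hp; eapply Permutation_in; [apply Permutation_sym, Hr| right; auto]).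
      destruct K as [[hc _]|[[hc _]|[[hc [ps' [E0 [Hne [HE0 [K1 [K2 K3]]]]]]]|[hc K1]]]]; try calc c.
      * apply d_CMC with (E0 ++ G0) (ps' ++ r) a0 b0; auto.
        -- destruct ps'; [congruence| discriminate].
        -- rewrite map_app. pm.
        -- intros p Hp. apply in_app_or in Hp. destruct Hp as [Hp|Hp]; auto.
           apply (cut1 c u); auto. apply (H3 (u,v)). eapply Permutation_in; [apply Permutation_sym, Hr| left; auto].
        -- intros p Hp. apply in_app_or in Hp. destruct Hp as [Hp|Hp]; auto.
           apply (cut1 c u); auto. apply (H5 (u,v)). eapply Permutation_in; [apply Permutation_sym, Hr| left; auto].
        -- rewrite map_app. exact (cv _ [] _ [b0] K3 (dv_perm c _ _ H7 _ _ Hs (Permutation_refl _))).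
      * assert (HH := cv [] [] _ [b0] K1 (dv_perm c _ _ H7 _ _ Hs (Permutation_refl _))). simpl in HH.
        destruct r as [|r0 r].
        -- apply d_CN with a0 b0; auto.
        -- apply d_CMC with (E ++ G0) (r0 :: r) a0 b0; auto. discriminate. pm.
    + destruct (in_perm _ _ HI) as [G0' HG0].
      apply d_CMC with (E ++ G0') ps a0 b0; auto. pm.
  - apply d_CN with a0 b0; auto.
Qed.

Lemma cut_gen c phi
 (PRand : forall a b, phi = And a b -> forall E D1 G2 D2, dv c E (a::D1) -> dv c E (b::D1) -> dv c (phi::G2) D2 -> dv c (E++G2) (D1++D2))
 (PRor : forall a b, phi = Or a b -> forall E D1 G2 D2, dv c E (a::b::D1) -> dv c (phi::G2) D2 -> dv c (E++G2) (D1++D2))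
 (PRimp : forall a b, phi = Imp a b -> forall E D1 G2 D2, dv c (a::E) (b::D1) -> dv c (phi::G2) D2 -> dv c (E++G2) (D1++D2))
 (PCond : forall u v, phi = Cond u v -> forall E, kern c u v E -> forall G2 D2, dv c (phi::G2) D2 -> dv c (E++G2) D2) :
 forall E F, dv c E F -> forall D1, Permutation F (phi::D1) -> forall G2 D2, dv c (phi::G2) D2 -> dv c (E++G2) (D1++D2).
Proof.
  induction 1; intros D1 HF G2 D2 HR.
  - destruct (in_cons_perm _ _ _ _ HF H0) as [e|Hi].
    + subst phi. destruct (in_perm _ _ H) as [E' HE'].
      apply (dv_wk c _ _ _ _ HR); [exists E'; pm | exists D1; pm].
    + apply d_ax with p; apply in_or_app; auto.
  - apply d_bot; apply in_or_app; auto.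
  - apply d_Land with (G0 := G0 ++ G2) (a:=a) (b:=b); [pm|].
    apply (IHdv D1 HF G2 D2 HR).
  - assert (HP : Permutation (And a b :: D0) (phi :: D1)) by (apply (Permutation_trans (Permutation_sym H) HF)).
    destruct (perm_cons_cases _ _ _ _ HP) as [[e HD]|[k [Hk1 Hk2]]].
    + apply PRand with a b; auto; [apply (dv_perm c _ _ H0)|apply (dv_perm c _ _ H1)]; auto.
    + apply d_Rand with (D0 := k ++ D2) (a:=a) (b:=b); [pm| |].
      * apply (IHdv1 (a::k) ltac:(pm) G2 D2 HR).
      * apply (IHdv2 (b::k) ltac:(pm) G2 D2 HR).
  - apply d_Lor with (G0 := G0 ++ G2) (a:=a) (b:=b); [pm| |].
    + apply (IHdv1 D1 HF G2 D2 HR).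
    + apply (IHdv2 D1 HF G2 D2 HR).
  - assert (HP : Permutation (Or a b :: D0) (phi :: D1)) by (apply (Permutation_trans (Permutation_sym H) HF)).
    destruct (perm_cons_cases _ _ _ _ HP) as [[e HD]|[k [Hk1 Hk2]]].
    + apply PRor with a b; auto; apply (dv_perm c _ _ H0); auto.
    + apply d_Ror with (D0 := k ++ D2) (a:=a) (b:=b); [pm|].
      apply (IHdv (a::b::k) ltac:(pm) G2 D2 HR).
  - apply d_Limp with (G0 := G0 ++ G2) (a:=a) (b:=b); [pm| |].
    + apply (IHdv1 (a::D1) ltac:(pm) G2 D2 HR).
    + apply (IHdv2 D1 HF G2 D2 HR).
  - assert (HP : Permutation (Imp a b :: D0) (phi :: D1)) by (apply (Permutation_trans (Permutation_sym H) HF)).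
    destruct (perm_cons_cases _ _ _ _ HP) as [[e HD]|[k [Hk1 Hk2]]].
    + apply PRimp with a b; auto; apply (dv_perm c _ _ H0); auto.
    + apply d_Rimp with (D0 := k ++ D2) (a:=a) (b:=b); [pm|].
      apply (IHdv (b::k) ltac:(pm) G2 D2 HR).
  - destruct (in_cons_perm _ _ _ _ HF H1) as [e|Hi].
    + apply (dv_wk c _ _ _ _ (PCond a0 b0 (eq_sym e) G ltac:(left; split; auto; exists a1, b1; auto) G2 D2 ltac:(subst phi; auto)));
      [exists []; pm | exists D1; pm].
    + apply d_CE with a0 a1 b0 b1; auto; apply in_or_app; auto.
  - destruct (in_cons_perm _ _ _ _ HF H1) as [e|Hi].
    + apply (dv_wk c _ _ _ _ (PCond a0 b0 (eq_sym e) G ltac:(right; left; split; auto; exists a1, b1; auto) G2 D2 ltac:(subst phi; auto)));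
      [exists []; pm | exists D1; pm].
    + apply d_CM with a0 a1 b0 b1; auto; apply in_or_app; auto.
  - destruct (in_cons_perm _ _ _ _ HF H2) as [e|Hi].
    + apply (dv_wk c _ _ _ _ (PCond a0 b0 (eq_sym e) G ltac:(right; right; left; split; auto; exists ps, G0; auto) G2 D2 ltac:(subst phi; auto)));
      [exists []; pm | exists D1; pm].
    + apply d_CMC with (G0 ++ G2) ps a0 b0; auto; [pm | apply in_or_app; auto].
  - destruct (in_cons_perm _ _ _ _ HF H0) as [e|Hi].
    + apply (dv_wk c _ _ _ _ (PCond a0 b0 (eq_sym e) G ltac:(right; right; right; split; auto) G2 D2 ltac:(subst phi; auto)));
      [exists []; pm | exists D1; pm].
    + apply d_CN with a0 b0; auto; apply in_or_app; auto.
Qed.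

Lemma cut_all : forall phi c, cutP c phi.
Proof.
  induction phi as [p| |a IHa b IHb|a IHa b IHb|a IHa b IHb|a IHa b IHb]; intros c G1 D1 G2 D2 HL HR;
  (refine (cut_gen c _ _ _ _ _ _ _ HL D1 (Permutation_refl _) G2 D2 HR); [intros x y e; try discriminate | intros x y e; try discriminate | intros x y e; try discriminate | intros x y e; try discriminate]).
  - injection e as <- <-. intros E D1' G2' D2' H1 H2 H3.
    assert (Hi := invLand c a b _ _ H3).
    assert (Hi' : dv c (b :: a :: G2') D2') by (apply (dv_perm c _ _ Hi); [pm | apply Permutation_refl]).
    assert (Hb := IHb c E D1' (a::G2') D2' H2 Hi').
    assert (Hb' : dv c (a :: E ++ G2') (D1' ++ D2')) by (apply (dv_perm c _ _ Hb); [pm | apply Permutation_refl]).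
    assert (Ha := IHa c E D1' (E ++ G2') (D1' ++ D2') H1 Hb').
    apply contr_lists; auto.
  - injection e as <- <-. intros E D1' G2' D2' H1 H3.
    assert (Ha := IHa c E (b::D1') G2' D2' H1 (invLor1 c a b _ _ H3)).
    assert (Ha' : dv c (E ++ G2') (b :: D1' ++ D2')) by (apply (dv_perm c _ _ Ha); [apply Permutation_refl | pm]).
    assert (Hb := IHb c (E ++ G2') (D1' ++ D2') G2' D2' Ha' (invLor2 c a b _ _ H3)).
    assert (Hb' : dv c (G2' ++ G2' ++ E) (D2' ++ D2' ++ D1')) by (apply (dv_perm c _ _ Hb); pm).
    assert (Hc := contr_lists c G2' D2' E D1' Hb').
    apply (dv_perm c _ _ Hc); pm.
  - injection e as <- <-. intros E D1' G2' D2' H1 H3.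
    assert (Hb := IHb c (a::E) D1' G2' D2' H1 (invLimp2 c a b _ _ H3)).
    assert (Hb' : dv c (a :: E ++ G2') (D1' ++ D2')) by (apply (dv_perm c _ _ Hb); [pm | apply Permutation_refl]).
    assert (Ha := IHa c G2' D2' (E ++ G2') (D1' ++ D2') (invLimp1 c a b _ _ H3) Hb').
    assert (Ha' : dv c (G2' ++ G2' ++ E) (D2' ++ D2' ++ D1')) by (apply (dv_perm c _ _ Ha); pm).
    assert (Hc := contr_lists c G2' D2' E D1' Ha').
    apply (dv_perm c _ _ Hc); pm.
  - injection e as <- <-. intros E K G2' D2' H3.
    apply (condcut c a b (IHa c) (IHb c) E K _ _ H3 G2'). apply Permutation_refl.
Qed.

Theorem mainTheorem2 : forall (c : calculus) (G1 G2 D1 D2 : list form) (phi : form),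
  derivable c G1 (phi :: D1) ->
  derivable c (phi :: G2) D2 ->
  derivable c (G1 ++ G2) (D1 ++ D2).
Proof.
  intros c G1 G2 D1 D2 phi H1 H2.
  apply dv2der. apply (cut_all phi c); apply der2dv; auto.
Qed.
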